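(* For every integer $d\ge 2$, $$2^{-d}+\frac{(2^d-1)\left(2^d-2+\sqrt{(2^d-2)^2+2^{d+3}d}\right)}{2^{2d+1}d}>\frac{3}{2^d+2}.$$ *)

(* Defs.v *)
From Stdlib Require Import Reals Lra Lia.

(* Main.v *)
Require Import Defs.
From Stdlib Require Import Reals Lra Lia.
Open Scope R_scope.

Theorem proposition2 (d : nat) (hd : (2 <= d)%nat) :
  / 2 ^ d
  + (2 ^ d - 1) * (2 ^ d - 2 + sqrt ((2 ^ d - 2) ^ 2 + 2 ^ (d + 3) * INR d))
    / (2 ^ (2 * d + 1) * INR d)
  > 3 / (2 ^ d + 2).
Proof.
  assert (HdN : (d < 2 ^ d)%nat) by (apply Nat.pow_gt_lin_r; lia).
  assert (HD : INR d < 2 ^ d).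
  { replace 2 with (INR 2) by (simpl; lra). rewrite <- pow_INR. apply lt_INR. exact HdN. }
  assert (HD2 : 2 <= INR d) by (replace 2 with (INR 2) by (simpl; lra); apply le_INR; exact hd).
  assert (HN4 : 4 <= 2 ^ d).
  { replace 4 with (2 ^ 2) by lra. apply Rle_pow; lra || lia. }
  rewrite pow_add, pow_add, pow_mult.
  replace ((2 ^ 2) ^ d) with (2 ^ d * 2 ^ d) by (rewrite <- pow_mult, <- pow_add; f_equal; lia).
  set (N := 2 ^ d) in *. set (D := INR d) in *.
  set (S := sqrt ((N - 2) ^ 2 + N * 2 ^ 3 * D)).
  assert (HS0 : 0 <= S) by apply sqrt_pos.
  assert (HS2 : S * S = (N - 2) ^ 2 + N * 2 ^ 3 * D).
  { apply sqrt_sqrt. nra. }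
  assert (Key : (N - 2 + S) * (N + 2) > 4 * N * D).
  { destruct (Rle_or_lt (4 * N * D) ((N - 2) * (N + 2))) as [H|H].
    - assert (0 < S * (N+2)).
      { apply Rmult_lt_0_compat; [|lra]. apply Rnot_le_lt; intro H'.
        assert (S = 0) by lra. rewrite H0 in HS2. nra. }
      nra.
    - apply Rnot_le_lt; intro H'.
      assert (HX : S * (N + 2) <= 4 * N * D - (N - 2) * (N + 2)) by nra.
      assert (HY : (S * (N + 2)) * (S * (N + 2)) <= (4 * N * D - (N - 2) * (N + 2)) * (4 * N * D - (N - 2) * (N + 2))).
      { apply Rmult_le_compat; nra. }
      replace ((S * (N + 2)) * (S * (N + 2))) with ((S * S) * ((N+2)*(N+2))) in HY by ring.
      rewrite HS2 in HY. nra. }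
  apply Rminus_gt.
  replace (/ N + (N - 1) * (N - 2 + S) / (N * N * 2 ^ 1 * D) - 3 / (N + 2))
    with (((N - 2 + S) * (N + 2) - 4 * N * D) * (N - 1) / (2 * N * N * D * (N + 2)))
    by (field; lra).
  apply Rdiv_lt_0_compat.
  - apply Rmult_lt_0_compat; lra.
  - repeat apply Rmult_lt_0_compat; lra.
Qed.
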